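(* Let $n,m\ge 1$ and let $T$ be a geometric tree covering $V(n,m)=\{1,\dots,n\}\times\{1,\dots,m\}$. Then: (i) $T$ has at least $2\min(n,m)-2$ edges; (ii) if $n,m\le 2$, $T$ has at least $2\min(n,m)-1$ edges; (iii) if $n\ne m$, $T$ has at least $2\min(n,m)-1$ edges; (iv) if $n=m\ge 3$ and $T$ is noncrossing, $T$ has at least $2n-1$ edges.
   Context: A geometric tree is a finite abstract tree with at least one edge whose vertices are distinct points of the plane (arbitrary, not necessarily grid points) and whose edges are drawn as closed straight-line segments between their endpoints. It covers $P$ if every point of $P$ lies on the union of its edges. It is noncrossing if any two edges intersect only if they share an endpoint, and then only in that endpoint. *)

(* Defs.v *)
From Stdlib Require Import Reals List Relations.
Import ListNotations.
Open Scope R_scope.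

Definition point := (R * R)%type.
Definition edge := (point * point)%type.

Definition on_segment (p : point) (e : edge) : Prop :=
  let (a, b) := e in
  exists t : R, 0 <= t <= 1 /\
    fst p = fst a + t * (fst b - fst a) /\
    snd p = snd a + t * (snd b - snd a).

Definition swap_edge (e : edge) : edge := (snd e, fst e).

Definition adj (E : list edge) (u v : point) : Prop :=
  In (u, v) E \/ In (v, u) E.

Fixpoint consec_adj (E : list edge) (c : list point) : Prop :=
  match c with
  | x :: ((y :: _) as r) => adj E x y /\ consec_adj E r
  | _ => True
  end.

Definition is_cycle (E : list edge) (c : list point) : Prop :=
  (3 <= length c)%nat /\ NoDup c /\ consec_adj E c /\
  exists x y, hd_error c = Some x /\ last c x = y /\ adj E y x.

(* Edges are drawn as closed segments. *)
Definition geometric_tree (V : list point) (E : list edge) : Prop :=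
  NoDup V /\
  E <> [] /\
  (forall e, In e E -> In (fst e) V /\ In (snd e) V /\ fst e <> snd e) /\
  NoDup E /\
  (forall e, In e E -> ~ In (swap_edge e) E) /\
  (forall u v, In u V -> In v V -> clos_refl_trans point (adj E) u v) /\
  (forall c, ~ is_cycle E c).

Definition covers_grid (E : list edge) (n m : nat) : Prop :=
  forall i j : nat, (1 <= i <= n)%nat -> (1 <= j <= m)%nat ->
    exists e, In e E /\ on_segment (INR i, INR j) e.

Definition is_endpoint (x : point) (e : edge) : Prop :=
  x = fst e \/ x = snd e.

Definition noncrossing (E : list edge) : Prop :=
  forall e1 e2 x, In e1 E -> In e2 E -> e1 <> e2 ->
    on_segment x e1 -> on_segment x e2 ->
    is_endpoint x e1 /\ is_endpoint x e2.

(* Main.v *)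
Require Import Defs.
From Stdlib Require Import Reals List Relations Arith.
From Stdlib Require Import Lra Lia Psatz Classical ClassicalEpsilon FinFun.
Import ListNotations.

Definition dec (P : Prop) : bool := if excluded_middle_informative P then true else false.
Lemma dec_true P : dec P = true <-> P.
Proof. unfold dec; destruct (excluded_middle_informative P); split; auto; discriminate. Qed.
Lemma dec_false P : dec P = false <-> ~ P.
Proof. unfold dec; destruct (excluded_middle_informative P); split; auto; try tauto; discriminate. Qed.

Fixpoint sumcap {X} (cap : X -> nat) (l : list X) : nat :=
  match l with [] => 0 | a :: l => cap a + sumcap cap l end.

Lemma filter_part {T} (f : T -> bool) (L : list T) :
  length L = (length (filter f L) + length (filter (fun x => negb (f x)) L))%nat.
Proof. induction L; simpl; auto. destruct (f a); simpl; lia. Qed.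

Lemma count_gen {T X} (L : list T) (E : list X) (R : T -> X -> Prop) (cap : X -> nat) :
  NoDup L -> (forall x, In x L -> exists e, In e E /\ R x e) ->
  (forall e, In e E -> forall S, NoDup S -> (forall x, In x S -> In x L /\ R x e) ->
     (length S <= cap e)%nat) ->
  (length L <= sumcap cap E)%nat.
Proof.
  revert L. induction E as [|e E IH]; intros L ND Hc Hf.
  - destruct L as [|x L]; simpl; [lia|].
    destruct (Hc x (or_introl eq_refl)) as [e [[] _]].
  - simpl. rewrite (filter_part (fun x => dec (R x e)) L).
    assert (H1 : (length (filter (fun x => dec (R x e)) L) <= cap e)%nat).
    { apply Hf; [left; auto | apply NoDup_filter; auto |].
      intros x Hx. apply filter_In in Hx. destruct Hx as [Hx Hr].
      apply (proj1 (dec_true _)) in Hr. tauto. }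
    assert (H2 : (length (filter (fun x => negb (dec (R x e))) L) <= sumcap cap E)%nat).
    { apply IH.
      - apply NoDup_filter; auto.
      - intros x Hx. apply filter_In in Hx. destruct Hx as [Hx Hr].
        destruct (Hc x Hx) as [e' [[<-|He'] Hr']].
        + apply Bool.negb_true_iff, (proj1 (dec_false _)) in Hr. contradiction.
        + eauto.
      - intros e' He' S ND' HS. apply (Hf e' (or_intror He') S ND').
        intros x Hx. destruct (HS x Hx) as [A B]. apply filter_In in A. tauto. }
    lia.
Qed.

Lemma sumcap_2 {X} (E : list X) : sumcap (fun _ => 2%nat) E = (2 * length E)%nat.
Proof. induction E; simpl; lia. Qed.

Lemma sumcap_notin {X} (E : list X) e0 : ~ In e0 E ->
  sumcap (fun e => if dec (e = e0) then 1%nat else 2%nat) E = (2 * length E)%nat.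
Proof.
  induction E as [|a E IH]; intros Hn; simpl; auto.
  destruct (dec (a = e0)) eqn:D.
  - apply (proj1 (dec_true _)) in D. subst. exfalso. apply Hn. left; auto.
  - rewrite IH; [lia|]. intro; apply Hn; right; auto.
Qed.

Lemma sumcap_one {X} (E : list X) e0 : NoDup E -> In e0 E ->
  (sumcap (fun e => if dec (e = e0) then 1%nat else 2%nat) E + 1 = 2 * length E)%nat.
Proof.
  induction E as [|e E IH]; intros ND Hin; [destruct Hin|].
  inversion ND as [|? ? Nin ND']; subst. simpl. destruct Hin as [ -> | Hin ].
  - rewrite sumcap_notin by auto.
    destruct (dec (e0 = e0)) eqn:D; [lia|]. apply (proj1 (dec_false _)) in D. tauto.
  - specialize (IH ND' Hin). destruct (dec (e = e0)) eqn:D.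
    + apply (proj1 (dec_true _)) in D. subst. contradiction.
    + lia.
Qed.

Lemma count2 {T X} (L : list T) (E : list X) (R : T -> X -> Prop) :
  NoDup L -> (forall x, In x L -> exists e, In e E /\ R x e) ->
  (forall e, In e E -> forall S, NoDup S -> (forall x, In x S -> In x L /\ R x e) ->
     (length S <= 2)%nat) ->
  (length L <= 2 * length E)%nat.
Proof. intros. rewrite <- sumcap_2. apply (count_gen L E R); auto. Qed.

Lemma count_strict {T X} (L : list T) (E : list X) (R : T -> X -> Prop) e0 :
  NoDup L -> NoDup E -> In e0 E -> (forall x, In x L -> exists e, In e E /\ R x e) ->
  (forall e, In e E -> forall S, NoDup S -> (forall x, In x S -> In x L /\ R x e) ->
     (length S <= 2)%nat) ->
  (forall S, NoDup S -> (forall x, In x S -> In x L /\ R x e0) -> (length S <= 1)%nat) ->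
  (length L < 2 * length E)%nat.
Proof.
  intros NDL NDE Hin Hc Hf H0.
  pose proof (sumcap_one E e0 NDE Hin).
  assert (length L <= sumcap (fun e => if dec (e = e0) then 1%nat else 2%nat) E)%nat.
  { apply (count_gen L E R); auto. intros e He S NDS HS.
    destruct (dec (e = e0)) eqn:D.
    - apply (proj1 (dec_true _)) in D; subst; auto.
    - eauto. }
  lia.
Qed.

Lemma tight {T X} (L : list T) (E : list X) (R : T -> X -> Prop) :
  NoDup L -> NoDup E -> (forall x, In x L -> exists e, In e E /\ R x e) ->
  (forall e, In e E -> forall S, NoDup S -> (forall x, In x S -> In x L /\ R x e) ->
     (length S <= 2)%nat) ->
  (2 * length E <= length L)%nat ->
  (forall e, In e E -> exists x y, In x L /\ In y L /\ x <> y /\ R x e /\ R y e) /\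
  (forall x e1 e2, In x L -> In e1 E -> In e2 E -> R x e1 -> R x e2 -> e1 = e2).
Proof.
  intros NDL NDE Hc Hf Hle. split.
  - intros e0 He0. apply NNPP. intro Hno.
    assert (length L < 2 * length E)%nat; [|lia].
    apply (count_strict L E R e0); auto.
    intros S NDS HS. destruct S as [|x [|y S]]; simpl; try lia.
    exfalso. apply Hno. exists x, y.
    inversion NDS; subst.
    destruct (HS x (or_introl eq_refl)), (HS y (or_intror (or_introl eq_refl))).
    repeat split; auto. intro; subst. apply H1; left; auto.
  - intros x1 e1 e2 Hx He1 He2 R1 R2. apply NNPP. intro Ne.
    set (R' := fun x e => R x e /\ ~ (x = x1 /\ e = e2)).
    assert (length L < 2 * length E)%nat; [|lia].
    apply (count_strict L E R' e2); auto.
    + intros x Hx'. destruct (classic (x = x1)) as [->|Nx].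
      * exists e1. split; auto. split; auto. intros [_ ?]. auto.
      * destruct (Hc x Hx') as [e [He Hr]]. exists e. split; auto. split; auto. tauto.
    + intros e He S NDS HS. apply (Hf e He S NDS). intros x Hy. destruct (HS x Hy) as [A [B _]]. auto.
    + intros S NDS HS.
      assert (~ In x1 S) by (intro I; destruct (HS x1 I) as [_ [_ C]]; tauto).
      assert (length (x1 :: S) <= 2)%nat; [|simpl in *; lia].
      apply (Hf e2 He2); [constructor; auto|].
      intros x [<-|Hx']; [split; auto|]. destruct (HS x Hx') as [A [B _]]; auto.
Qed.

Open Scope R_scope.


Lemma conv0 (mu a b : R) : 0 < mu < 1 -> 0 <= a -> 0 <= b ->
  (1 - mu) * a + mu * b = 0 -> a = 0 /\ b = 0.
Proof. intros. nra. Qed.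

Definition rect (x0 x1 y0 y1 : R) (p : point) :=
  x0 <= fst p <= x1 /\ y0 <= snd p <= y1.
Definition bd (x0 x1 y0 y1 : R) (p : point) :=
  rect x0 x1 y0 y1 p /\
  (fst p = x0 \/ fst p = x1 \/ snd p = y0 \/ snd p = y1).

Definition betw (u v w : point) (mu : R) :=
  0 < mu < 1 /\ fst u = fst v + mu * (fst w - fst v) /\
  snd u = snd v + mu * (snd w - snd v).

Lemma mid_side x0 x1 y0 y1 u v w mu :
  bd x0 x1 y0 y1 u -> rect x0 x1 y0 y1 v -> rect x0 x1 y0 y1 w ->
  betw u v w mu ->
  (fst v = fst u /\ fst w = fst u) \/ (snd v = snd u /\ snd w = snd u).
Proof.
  unfold bd, rect, betw. intros [[Hx Hy] Hs] [Hvx Hvy] [Hwx Hwy] [Hm [Ex Ey]].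
  destruct Hs as [H|[H|[H|H]]].
  - left. destruct (conv0 mu (fst v - x0) (fst w - x0)) as [A B]; try lra.
  - left. destruct (conv0 mu (x1 - fst v) (x1 - fst w)) as [A B]; try lra.
  - right. destruct (conv0 mu (snd v - y0) (snd w - y0)) as [A B]; try lra.
  - right. destruct (conv0 mu (y1 - snd v) (y1 - snd w)) as [A B]; try lra.
Qed.

Lemma col3 x0 x1 y0 y1 p q z lam :
  bd x0 x1 y0 y1 p -> bd x0 x1 y0 y1 q -> bd x0 x1 y0 y1 z ->
  z <> p -> z <> q ->
  fst z = fst p + lam * (fst q - fst p) ->
  snd z = snd p + lam * (snd q - snd p) ->
  fst p = fst q \/ snd p = snd q.
Proof.
  intros Bp Bq Bz Nzp Nzq Ex Ey.
  destruct p as [px py], q as [qx qy], z as [zx zy]; simpl in *.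
  assert (Hl0 : lam <> 0).
  { intro; subst. apply Nzp. f_equal; lra. }
  assert (Hl1 : lam <> 1).
  { intro; subst. apply Nzq. f_equal; lra. }
  destruct (Rlt_or_le lam 0) as [Hn|Hn].
  -
    pose (mu := - lam / (1 - lam)).
    assert (Hmu : 0 < mu < 1).
    { unfold mu. split.
      - apply Rdiv_lt_0_compat; lra.
      - apply Rmult_lt_reg_r with (1 - lam); [lra|].
        unfold Rdiv. rewrite Rmult_assoc, Rinv_l by lra. lra. }
    assert (Hb : betw (px,py) (zx,zy) (qx,qy) mu).
    { unfold betw; simpl; split; [exact Hmu|].
      unfold mu; split; [rewrite Ex | rewrite Ey]; field; lra. }
    destruct (mid_side x0 x1 y0 y1 _ _ _ mu Bp (proj1 Bz) (proj1 Bq) Hb)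
      as [[A B]|[A B]]; simpl in *; auto.
  - destruct (Rlt_or_le 1 lam) as [Hg|Hg].
    + pose (mu := 1 / lam).
      assert (Hmu : 0 < mu < 1).
      { unfold mu. split.
        - apply Rdiv_lt_0_compat; lra.
        - apply Rmult_lt_reg_r with lam; [lra|].
          unfold Rdiv. rewrite Rmult_assoc, Rinv_l by lra. lra. }
      assert (Hb : betw (qx,qy) (px,py) (zx,zy) mu).
      { unfold betw; simpl; split; [exact Hmu|].
        unfold mu; split; [rewrite Ex | rewrite Ey]; field; lra. }
      destruct (mid_side x0 x1 y0 y1 _ _ _ mu Bq (proj1 Bp) (proj1 Bz) Hb)
        as [[A B]|[A B]]; simpl in *; auto.
    + assert (Hb : betw (zx,zy) (px,py) (qx,qy) lam).
      { unfold betw; simpl; split; [lra|]. split; lra. }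
      destruct (mid_side x0 x1 y0 y1 _ _ _ lam Bz (proj1 Bp) (proj1 Bq) Hb)
        as [[A B]|[A B]]; simpl in *; [left|right]; lra.
Qed.


Definition cr (p q z : point) : R :=
  (fst q - fst p) * (snd z - snd p) - (snd q - snd p) * (fst z - fst p).

Lemma seg_param p e : on_segment p e ->
  exists t, 0 <= t <= 1 /\ fst p = fst (fst e) + t * (fst (snd e) - fst (fst e)) /\
    snd p = snd (fst e) + t * (snd (snd e) - snd (fst e)).
Proof. destruct e as [a b]. simpl. auto. Qed.

Lemma param_seg p e t : 0 <= t <= 1 ->
  fst p = fst (fst e) + t * (fst (snd e) - fst (fst e)) ->
  snd p = snd (fst e) + t * (snd (snd e) - snd (fst e)) -> on_segment p e.
Proof. destruct e as [a b]. simpl. intros. exists t. auto. Qed.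

Lemma pt_eq (p q : point) : fst p = fst q -> snd p = snd q -> p = q.
Proof. destruct p, q; simpl; intros; subst; auto. Qed.

Lemma seg_col p q z e : on_segment p e -> on_segment q e -> on_segment z e ->
  p <> q -> exists lam, fst z = fst p + lam * (fst q - fst p) /\
                         snd z = snd p + lam * (snd q - snd p).
Proof.
  intros Hp Hq Hz Npq.
  destruct (seg_param _ _ Hp) as [tp [Tp [Xp Yp]]].
  destruct (seg_param _ _ Hq) as [tq [Tq [Xq Yq]]].
  destruct (seg_param _ _ Hz) as [tz [Tz [Xz Yz]]].
  assert (tp <> tq).
  { intro; subst. apply Npq. apply pt_eq; lra. }
  exists ((tz - tp) / (tq - tp)).
  rewrite Xz, Xp, Xq, Yz, Yp, Yq. split; field; lra.
Qed.

Lemma seg_conv p q X e lam : on_segment p e -> on_segment q e ->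
  0 <= lam <= 1 ->
  fst X = fst p + lam * (fst q - fst p) -> snd X = snd p + lam * (snd q - snd p) ->
  on_segment X e.
Proof.
  intros Hp Hq Hl EX EY.
  destruct (seg_param _ _ Hp) as [tp [Tp [Xp Yp]]].
  destruct (seg_param _ _ Hq) as [tq [Tq [Xq Yq]]].
  apply param_seg with (tp + lam * (tq - tp)).
  - split; nra.
  - rewrite EX, Xp, Xq. destruct e as [[ax ay] [bx by_]]; simpl. ring.
  - rewrite EY, Yp, Yq. destruct e as [[ax ay] [bx by_]]; simpl. ring.
Qed.

Lemma seg_not_end p q X e lam : on_segment p e -> on_segment q e ->
  fst e <> snd e -> p <> q -> 0 < lam < 1 ->
  fst X = fst p + lam * (fst q - fst p) -> snd X = snd p + lam * (snd q - snd p) ->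
  ~ is_endpoint X e.
Proof.
  intros Hp Hq Nab Npq Hl EX EY Hend.
  destruct (seg_param _ _ Hp) as [tp [Tp [Xp Yp]]].
  destruct (seg_param _ _ Hq) as [tq [Tq [Xq Yq]]].
  assert (tp <> tq).
  { intro; subst. apply Npq. apply pt_eq; lra. }
  destruct e as [[ax ay] [bx by_]]; simpl in *.
  assert (Hab : ax <> bx \/ ay <> by_).
  { destruct (Req_dec ax bx); destruct (Req_dec ay by_); subst; auto. }
  set (tX := tp + lam * (tq - tp)) in *.
  assert (0 < tX < 1).
  { unfold tX. destruct (Rlt_or_le tp tq); split; nra. }
  assert (EX' : fst X = ax + tX * (bx - ax)) by (rewrite EX, Xp, Xq; unfold tX; ring).
  assert (EY' : snd X = ay + tX * (by_ - ay)) by (rewrite EY, Yp, Yq; unfold tX; ring).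
  destruct Hend as [He|He]; rewrite He in EX', EY'; simpl in EX', EY';
  destruct Hab as [Hab|Hab]; apply Hab; nra.
Qed.

Lemma seg_horiz p q e : on_segment p e -> on_segment q e -> p <> q ->
  snd p = snd q -> snd (fst e) = snd (snd e).
Proof.
  intros Hp Hq Npq Hy.
  destruct (seg_param _ _ Hp) as [tp [Tp [Xp Yp]]].
  destruct (seg_param _ _ Hq) as [tq [Tq [Xq Yq]]].
  assert (tp <> tq).
  { intro; subst. apply Npq. apply pt_eq; lra. }
  assert ((tp - tq) * (snd (snd e) - snd (fst e)) = 0) by nra.
  apply Rmult_integral in H0. destruct H0; lra.
Qed.

Lemma seg_vert p q e : on_segment p e -> on_segment q e -> p <> q ->
  fst p = fst q -> fst (fst e) = fst (snd e).
Proof.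
  intros Hp Hq Npq Hy.
  destruct (seg_param _ _ Hp) as [tp [Tp [Xp Yp]]].
  destruct (seg_param _ _ Hq) as [tq [Tq [Xq Yq]]].
  assert (tp <> tq).
  { intro; subst. apply Npq. apply pt_eq; lra. }
  assert ((tp - tq) * (fst (snd e) - fst (fst e)) = 0) by nra.
  apply Rmult_integral in H0. destruct H0; lra.
Qed.

Lemma seg_y z e : on_segment z e -> snd (fst e) = snd (snd e) -> snd z = snd (fst e).
Proof. intros Hz H. destruct (seg_param _ _ Hz) as [t [T [X Y]]]. rewrite Y, H. ring. Qed.
Lemma seg_x z e : on_segment z e -> fst (fst e) = fst (snd e) -> fst z = fst (fst e).
Proof. intros Hz H. destruct (seg_param _ _ Hz) as [t [T [X Y]]]. rewrite X, H. ring. Qed.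

Lemma line_param p q X : p <> q -> cr p q X = 0 ->
  exists lam, fst X = fst p + lam * (fst q - fst p) /\ snd X = snd p + lam * (snd q - snd p).
Proof.
  unfold cr. intros Npq H.
  destruct (Req_dec (fst q) (fst p)) as [Ex|Ex].
  - assert (snd q <> snd p).
    { intro. apply Npq. apply pt_eq; lra. }
    exists ((snd X - snd p) / (snd q - snd p)). split.
    + assert ((snd q - snd p) * (fst X - fst p) = 0) by nra.
      apply Rmult_integral in H1. destruct H1; [lra|]. rewrite Ex. lra.
    + field. lra.
  - exists ((fst X - fst p) / (fst q - fst p)). split.
    + field. lra.
    + apply Rmult_eq_reg_l with (fst q - fst p); [|lra].
      field_simplify; [|lra]. nra.
Qed.

Lemma fib3 x0 x1 y0 y1 p q z e :
  bd x0 x1 y0 y1 p -> bd x0 x1 y0 y1 q -> bd x0 x1 y0 y1 z ->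
  p <> q -> z <> p -> z <> q ->
  on_segment p e -> on_segment q e -> on_segment z e ->
  fst p = fst q \/ snd p = snd q.
Proof.
  intros Bp Bq Bz Npq Nzp Nzq Hp Hq Hz.
  destruct (seg_col p q z e Hp Hq Hz Npq) as [lam [Ex Ey]].
  eapply col3; eauto.
Qed.


Lemma cr_aff p q s t nu :
  cr p q (fst s + nu * (fst t - fst s), snd s + nu * (snd t - snd s)) =
  cr p q s + nu * (cr p q t - cr p q s).
Proof. unfold cr; simpl. ring. Qed.

Lemma cr_self1 s t : cr s t s = 0.
Proof. unfold cr; ring. Qed.
Lemma cr_self2 s t : cr s t t = 0.
Proof. unfold cr; ring. Qed.
Lemma cr_swap s t z : cr t s z = - cr s t z.
Proof. unfold cr; ring. Qed.

Lemma in_seg x0 x1 y0 y1 u s t nu :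
  bd x0 x1 y0 y1 u -> rect x0 x1 y0 y1 s -> rect x0 x1 y0 y1 t ->
  fst s <> fst t -> snd s <> snd t -> 0 < nu < 1 ->
  fst u = fst s + nu * (fst t - fst s) -> snd u = snd s + nu * (snd t - snd s) ->
  False.
Proof.
  intros Bu Rs Rt N1 N2 Hn E1 E2.
  destruct (mid_side x0 x1 y0 y1 u s t nu Bu Rs Rt) as [[A B]|[A B]].
  - split; auto.
  - apply N1; lra.
  - apply N2; lra.
Qed.

Lemma out_seg x0 x1 y0 y1 u v X lam :
  bd x0 x1 y0 y1 u -> bd x0 x1 y0 y1 v -> rect x0 x1 y0 y1 X ->
  fst u <> fst v -> snd u <> snd v -> lam < 0 ->
  fst X = fst u + lam * (fst v - fst u) -> snd X = snd u + lam * (snd v - snd u) ->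
  False.
Proof.
  intros Bu Bv RX N1 N2 Hl E1 E2.
  pose (mu := - lam / (1 - lam)).
  assert (Hmu : 0 < mu < 1).
  { unfold mu. split.
    - apply Rdiv_lt_0_compat; lra.
    - apply Rmult_lt_reg_r with (1 - lam); [lra|].
      unfold Rdiv. rewrite Rmult_assoc, Rinv_l by lra. lra. }
  destruct (mid_side x0 x1 y0 y1 u X v mu Bu RX (proj1 Bv)) as [[A B]|[A B]].
  - unfold betw. split; [exact Hmu|]. unfold mu.
    split; [rewrite E1|rewrite E2]; field; lra.
  - apply N1; lra.
  - apply N2; lra.
Qed.

Lemma out_seg' x0 x1 y0 y1 u v X lam :
  bd x0 x1 y0 y1 u -> bd x0 x1 y0 y1 v -> rect x0 x1 y0 y1 X ->
  fst u <> fst v -> snd u <> snd v -> 1 < lam ->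
  fst X = fst u + lam * (fst v - fst u) -> snd X = snd u + lam * (snd v - snd u) ->
  False.
Proof.
  intros Bu Bv RX N1 N2 Hl E1 E2.
  apply (out_seg x0 x1 y0 y1 v u X (1 - lam)); auto; try lra.
Qed.

Lemma rect_conv x0 x1 y0 y1 s t nu : rect x0 x1 y0 y1 s -> rect x0 x1 y0 y1 t ->
  0 <= nu <= 1 ->
  rect x0 x1 y0 y1 (fst s + nu * (fst t - fst s), snd s + nu * (snd t - snd s)).
Proof. unfold rect; simpl; intros; split; split; nra. Qed.

Lemma cross_contra x0 x1 y0 y1 p q s t e1 e2 :
  bd x0 x1 y0 y1 p -> bd x0 x1 y0 y1 q -> bd x0 x1 y0 y1 s -> bd x0 x1 y0 y1 t ->
  on_segment p e1 -> on_segment q e1 -> on_segment s e2 -> on_segment t e2 ->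
  fst e1 <> snd e1 ->
  fst p <> fst q -> snd p <> snd q -> fst s <> fst t -> snd s <> snd t ->
  (forall X, on_segment X e1 -> on_segment X e2 -> is_endpoint X e1) ->
  0 < cr p q s -> cr p q t < 0 -> False.
Proof.
  intros Bp Bq Bs Bt Hp Hq Hs Ht Ne Np1 Np2 Ns1 Ns2 NC Gs Gt.
  set (nu := cr p q s / (cr p q s - cr p q t)).
  assert (Hnu : 0 < nu < 1).
  { unfold nu. split.
    - apply Rdiv_lt_0_compat; lra.
    - apply Rmult_lt_reg_r with (cr p q s - cr p q t); [lra|].
      unfold Rdiv. rewrite Rmult_assoc, Rinv_l by lra. lra. }
  set (X := (fst s + nu * (fst t - fst s), snd s + nu * (snd t - snd s))).
  assert (GX : cr p q X = 0).
  { unfold X. rewrite cr_aff. unfold nu. field. lra. }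
  assert (RX : rect x0 x1 y0 y1 X) by (apply rect_conv; [apply Bs|apply Bt|lra]).
  assert (Npq : p <> q) by (intro; subst; auto).
  destruct (line_param p q X Npq GX) as [lam [E1 E2]].
  destruct (Rlt_or_le lam 0) as [H0|H0].
  { eapply (out_seg x0 x1 y0 y1 p q X lam); eauto. }
  destruct (Rlt_or_le 1 lam) as [H1|H1].
  { eapply (out_seg' x0 x1 y0 y1 p q X lam); eauto. }
  destruct (Req_dec lam 0) as [L0|L0].
  { subst lam. apply (in_seg x0 x1 y0 y1 p s t nu Bp (proj1 Bs) (proj1 Bt)); auto;
    [rewrite <- (Rplus_0_r (fst p)) | rewrite <- (Rplus_0_r (snd p))];
    [replace (fst p + 0) with (fst X) by lra | replace (snd p + 0) with (snd X) by lra];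
    unfold X; reflexivity. }
  destruct (Req_dec lam 1) as [L1|L1].
  { subst lam. apply (in_seg x0 x1 y0 y1 q s t nu Bq (proj1 Bs) (proj1 Bt)); auto;
    [replace (fst q) with (fst X) by lra | replace (snd q) with (snd X) by lra];
    unfold X; reflexivity. }
  assert (OX1 : on_segment X e1) by (apply (seg_conv p q X e1 lam); auto; lra).
  assert (OX2 : on_segment X e2).
  { apply (seg_conv s t X e2 nu); auto; try lra; unfold X; reflexivity. }
  apply (seg_not_end p q X e1 lam Hp Hq Ne Npq); auto; lra.
Qed.

Lemma five x0 x1 y0 y1 p q s t z :
  bd x0 x1 y0 y1 p -> bd x0 x1 y0 y1 q -> rect x0 x1 y0 y1 s -> rect x0 x1 y0 y1 z ->
  fst p <> fst q -> snd p <> snd q ->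
  cr s t p < 0 -> cr s t q < 0 -> 0 < cr p q s -> cr p q z < 0 -> 0 < cr s t z -> False.
Proof.
  intros Bp Bq Rs Rz Np1 Np2 Hp Hq Gs Gz Hz.
  set (nu := (- cr p q z) / (- cr p q z + cr p q s)).
  assert (Hnu : 0 < nu < 1).
  { unfold nu. split.
    - apply Rdiv_lt_0_compat; lra.
    - apply Rmult_lt_reg_r with (- cr p q z + cr p q s); [lra|].
      unfold Rdiv. rewrite Rmult_assoc, Rinv_l by lra. lra. }
  set (Y := (fst z + nu * (fst s - fst z), snd z + nu * (snd s - snd z))).
  assert (GY : cr p q Y = 0).
  { unfold Y. rewrite cr_aff. unfold nu. field. lra. }
  assert (HY : 0 < cr s t Y).
  { unfold Y. rewrite cr_aff, cr_self1. nra. }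
  assert (RY : rect x0 x1 y0 y1 Y) by (apply rect_conv; auto; lra).
  assert (Npq : p <> q) by (intro; subst; auto).
  clearbody Y. destruct (line_param p q Y Npq GY) as [lam [E1 E2]].
  destruct (Rlt_or_le lam 0) as [H0|H0].
  { eapply (out_seg x0 x1 y0 y1 p q Y lam); eauto. }
  destruct (Rlt_or_le 1 lam) as [H1|H1].
  { eapply (out_seg' x0 x1 y0 y1 p q Y lam); eauto. }
  assert (cr s t Y = cr s t p + lam * (cr s t q - cr s t p)).
  { replace Y with (fst p + lam * (fst q - fst p), snd p + lam * (snd q - snd p)).
    - apply cr_aff.
    - apply pt_eq; simpl; lra. }
  nra.
Qed.

Lemma corner x0 x1 y0 y1 p q :
  rect x0 x1 y0 y1 p -> rect x0 x1 y0 y1 q -> fst p <> fst q -> snd p <> snd q ->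
  exists c, (c = (x0,y0) \/ c = (x0,y1) \/ c = (x1,y0) \/ c = (x1,y1)) /\ 0 < cr p q c.
Proof.
  unfold rect, cr. intros [Px Py] [Qx Qy] N1 N2.
  set (A := - (snd q - snd p)). set (B := fst q - fst p).
  assert (HA : A <> 0) by (unfold A; lra).
  assert (HB : B <> 0) by (unfold B; lra).
  set (Mx := (fst p + fst q) / 2). set (My := (snd p + snd q) / 2).
  assert (x0 < Mx < x1) by (unfold Mx; lra).
  assert (y0 < My < y1) by (unfold My; lra).
  assert (Hc : forall cx cy, (fst q - fst p) * (cy - snd p) - (snd q - snd p) * (cx - fst p)
     = A * (cx - Mx) + B * (cy - My)) by (intros; unfold A, B, Mx, My; field).
  destruct (Rlt_or_le 0 A) as [a|a]; destruct (Rlt_or_le 0 B) as [b|b].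
  - exists (x1,y1). split; [tauto|]. simpl. rewrite Hc. nra.
  - exists (x1,y0). split; [tauto|]. simpl. rewrite Hc. assert (B < 0) by lra. nra.
  - exists (x0,y1). split; [tauto|]. simpl. rewrite Hc. assert (A < 0) by lra. nra.
  - exists (x0,y0). split; [tauto|]. simpl. rewrite Hc. assert (A < 0) by lra. assert (B<0) by lra. nra.
Qed.


Lemma filter_le {X} (l : list X) (f g : X -> bool) :
  (forall z, In z l -> f z = true -> g z = true) ->
  (length (filter f l) <= length (filter g l))%nat.
Proof.
  induction l as [|a l IH]; simpl; intros H; [lia|].
  specialize (IH (fun z Hz => H z (or_intror Hz))).
  destruct (f a) eqn:Fa.
  - rewrite (H a (or_introl eq_refl) Fa). simpl. lia.
  - destruct (g a); simpl; lia.
Qed.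

Lemma filter_lt {X} (l : list X) (f g : X -> bool) z0 :
  (forall z, In z l -> f z = true -> g z = true) ->
  In z0 l -> g z0 = true -> f z0 = false ->
  (length (filter f l) < length (filter g l))%nat.
Proof.
  induction l as [|a l IH]; simpl; intros H Hin G0 F0; [tauto|].
  destruct Hin as [<-|Hin].
  - rewrite F0, G0. simpl.
    pose proof (filter_le l f g (fun z Hz => H z (or_intror Hz))). lia.
  - specialize (IH (fun z Hz => H z (or_intror Hz)) Hin G0 F0).
    destruct (f a) eqn:Fa.
    + rewrite (H a (or_introl eq_refl) Fa). simpl. lia.
    + destruct (g a); simpl; lia.
Qed.

Definition posb (p q z : point) : bool := if Rlt_dec 0 (cr p q z) then true else false.

Lemma cr_pp p q : cr p q p = 0.
Proof. unfold cr; ring. Qed.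
Lemma cr_qq p q : cr p q q = 0.
Proof. unfold cr; ring. Qed.

Lemma matching x0 x1 y0 y1 (E : list edge) (Bl : list point) :
  x0 < x1 -> y0 < y1 ->
  (forall z, In z Bl -> bd x0 x1 y0 y1 z) ->
  In (x0,y0) Bl -> In (x0,y1) Bl -> In (x1,y0) Bl -> In (x1,y1) Bl ->
  (forall e, In e E -> fst e <> snd e) ->
  (forall z, In z Bl -> exists t e, In t Bl /\ In e E /\ t <> z /\
       on_segment z e /\ on_segment t e) ->
  (forall e p q, In e E -> In p Bl -> In q Bl -> p <> q -> on_segment p e ->
       on_segment q e -> fst p <> fst q /\ snd p <> snd q) ->
  (forall z e e', In z Bl -> In e E -> In e' E -> on_segment z e ->
       on_segment z e' -> e = e') ->
  noncrossing E -> False.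
Proof.
  intros Hx Hy HB C00 C01 C10 C11 Hne Hpart Hdiff Huniq NC.
  assert (Main : forall N p q e, In p Bl -> In q Bl -> In e E -> p <> q ->
            on_segment p e -> on_segment q e ->
            (length (filter (posb p q) Bl) <= N)%nat -> False).
  { induction N as [|N IH]; intros p q e1 Ip Iq Ie1 Npq Op Oq Hcnt;
    destruct (Hdiff e1 p q Ie1 Ip Iq Npq Op Oq) as [D1 D2];
    pose proof (HB p Ip) as Bp; pose proof (HB q Iq) as Bq;
    (destruct (corner x0 x1 y0 y1 p q (proj1 Bp) (proj1 Bq) D1 D2) as [s [Hs Gs]];
     assert (Is : In s Bl) by (destruct Hs as [ -> | [ -> | [ -> | -> ] ] ]; auto);
     clear Hs;
     pose proof (HB s Is) as Bs;
     assert (Nsp : s <> p) by (intro; subst; rewrite cr_pp in Gs; lra);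
     assert (Nsq : s <> q) by (intro; subst; rewrite cr_qq in Gs; lra);
     destruct (Hpart s Is) as [t [e2 [It [Ie2 [Nts [Os Ot]]]]]];
     pose proof (HB t It) as Bt;
     destruct (Hdiff e2 s t Ie2 Is It (not_eq_sym Nts) Os Ot) as [D3 D4];
     assert (Ne12 : e1 <> e2)
       by (intro; subst e2; destruct (fib3 x0 x1 y0 y1 p q s e1 Bp Bq Bs Npq Nsp Nsq Op Oq Os);
           auto);
     assert (Ntp : t <> p)
       by (intro; subst t; apply Ne12; apply (Huniq p e1 e2); auto);
     assert (Ntq : t <> q)
       by (intro; subst t; apply Ne12; apply (Huniq q e1 e2); auto);
     assert (NC12 : forall X, on_segment X e1 -> on_segment X e2 -> is_endpoint X e1)
       by (intros X H1 H2; exact (proj1 (NC e1 e2 X Ie1 Ie2 Ne12 H1 H2)));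
     assert (NC21 : forall X, on_segment X e2 -> on_segment X e1 -> is_endpoint X e2)
       by (intros X H1 H2; exact (proj1 (NC e2 e1 X Ie2 Ie1 (not_eq_sym Ne12) H1 H2)));
     assert (Gt : 0 < cr p q t)
       by (destruct (Rtotal_order 0 (cr p q t)) as [G|[G|G]]; auto;
           [ destruct (line_param p q t Npq (eq_sym G)) as [lam [E1 E2]];
             destruct (col3 x0 x1 y0 y1 p q t lam Bp Bq Bt Ntp Ntq E1 E2); contradiction
           | exfalso; apply (cross_contra x0 x1 y0 y1 p q s t e1 e2); auto]);
     assert (Hp0 : cr s t p <> 0)
       by (intro G; destruct (line_param s t p (not_eq_sym Nts) G) as [lam [E1 E2]];
           destruct (col3 x0 x1 y0 y1 s t p lam Bs Bt Bp (not_eq_sym Nsp) (not_eq_sym Ntp) E1 E2);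
           contradiction);
     assert (Orient : exists s' t', ((s' = s /\ t' = t) \/ (s' = t /\ t' = s)) /\
                                    cr s' t' p < 0)
       by (destruct (Rlt_or_le (cr s t p) 0) as [G|G];
           [exists s, t; split; auto
           | exists t, s; split; auto; rewrite cr_swap; lra]);
     destruct Orient as [s' [t' [Hst Hp']]];
     assert (Is' : In s' Bl) by (destruct Hst as [[ -> -> ] | [ -> -> ]]; auto);
     assert (It' : In t' Bl) by (destruct Hst as [[ -> -> ] | [ -> -> ]]; auto);
     assert (Os' : on_segment s' e2) by (destruct Hst as [[ -> -> ] | [ -> -> ]]; auto);
     assert (Ot' : on_segment t' e2) by (destruct Hst as [[ -> -> ] | [ -> -> ]]; auto);
     assert (Nst' : s' <> t') by (destruct Hst as [[ -> -> ] | [ -> -> ]]; auto);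
     assert (Gs' : 0 < cr p q s') by (destruct Hst as [[ -> -> ] | [ -> -> ]]; auto);
     assert (Bs' : bd x0 x1 y0 y1 s') by auto;
     assert (Bt' : bd x0 x1 y0 y1 t') by auto;
     destruct (Hdiff e2 s' t' Ie2 Is' It' Nst' Os' Ot') as [D5 D6];
     assert (Np' : p <> s' /\ p <> t') by (destruct Hst as [[ -> -> ] | [ -> -> ]]; auto);
     assert (Nq' : q <> s' /\ q <> t') by (destruct Hst as [[ -> -> ] | [ -> -> ]]; auto);
     assert (Hq' : cr s' t' q < 0)
       by (destruct (Rtotal_order (cr s' t' q) 0) as [G|[G|G]]; auto;
           [ destruct (line_param s' t' q Nst' G) as [lam [E1 E2]];
             destruct (col3 x0 x1 y0 y1 s' t' q lam Bs' Bt' Bq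
                         (proj1 Nq') (proj2 Nq') E1 E2); contradiction
           | exfalso; apply (cross_contra x0 x1 y0 y1 s' t' q p e2 e1); auto ]);
     assert (Hlt : (length (filter (posb s' t') Bl) < length (filter (posb p q) Bl))%nat)
       by (apply filter_lt with s';
           [ intros z Iz; unfold posb;
             destruct (Rlt_dec 0 (cr s' t' z)) as [Hz|Hz]; [|discriminate]; intros _;
             destruct (Rlt_dec 0 (cr p q z)) as [Gz|Gz]; [reflexivity|];
             exfalso; pose proof (HB z Iz) as Bz;
             assert (Nzp : z <> p) by (intro; subst; lra);
             assert (Nzq : z <> q) by (intro; subst; lra);
             destruct (Rtotal_order (cr p q z) 0) as [G|[G|G]]; [ | | lra ];
             [ apply (five x0 x1 y0 y1 p q s' t' z Bp Bq (proj1 Bs') (proj1 Bz)); auto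
             | destruct (line_param p q z Npq G) as [lam [E1 E2]];
               destruct (col3 x0 x1 y0 y1 p q z lam Bp Bq Bz Nzp Nzq E1 E2); contradiction ]
           | exact Is'
           | unfold posb; destruct (Rlt_dec 0 (cr p q s')); [reflexivity|lra]
           | unfold posb; rewrite cr_self1; destruct (Rlt_dec 0 0); [lra|reflexivity] ])).
    - lia.
    - apply (IH s' t' e2 Is' It' Ie2 Nst' Os' Ot'). lia. }
  destruct (Hpart (x0,y0) C00) as [t [e [It [Ie [Nt [O1 O2]]]]]].
  apply (Main _ (x0,y0) t e C00 It Ie (not_eq_sym Nt) O1 O2 (le_n _)).
Qed.


Lemma exit_edge (E : list edge) (pi : point -> R) (S : list R) u v :
  clos_refl_trans point (adj E) u v -> In (pi u) S -> ~ In (pi v) S ->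
  exists g, In g E /\ ((In (pi (fst g)) S /\ ~ In (pi (snd g)) S) \/
                       (In (pi (snd g)) S /\ ~ In (pi (fst g)) S)).
Proof.
  intros H. apply clos_rt_rt1n in H. induction H as [x|x y z Hxy Hyz IH]; intros Hu Hv.
  - contradiction.
  - destruct (classic (In (pi y) S)) as [Hy|Hy]; auto.
    destruct Hxy as [Hxy|Hxy].
    + exists (x, y). simpl. auto.
    + exists (y, x). simpl. auto.
Qed.

Lemma levels_conn (V : list point) (E : list edge) (pi : point -> R) (W : list R) :
  (forall u v, In u V -> In v V -> clos_refl_trans point (adj E) u v) ->
  NoDup W -> W <> [] ->
  (forall w, In w W -> exists v, In v V /\ pi v = w) ->
  exists G, NoDup G /\ incl G E /\ (length W <= S (length G))%nat /\
    (forall g, In g G -> pi (fst g) <> pi (snd g)).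
Proof.
  intros Hconn NDW NW Hlev.
  destruct W as [|w0 W']; [congruence|].
  destruct (Hlev w0 (or_introl eq_refl)) as [v0 [Iv0 Pv0]].
  assert (P : forall k, (k < length (w0 :: W'))%nat ->
     exists S G, NoDup S /\ length S = Datatypes.S k /\ In w0 S /\ NoDup G /\ incl G E /\
       length G = k /\ forall g, In g G -> In (pi (fst g)) S /\ In (pi (snd g)) S /\
                                   pi (fst g) <> pi (snd g)).
  { induction k as [|k IH]; intros Hk.
    - exists [w0], []. split; [constructor; [intros []|constructor]|].
      split; [reflexivity|]. split; [left; auto|]. split; [constructor|].
      split; [intros x []|]. split; [reflexivity|]. intros g [].
    - destruct IH as [S [G [NDS [LS [I0 [NDG [IG [LG HG]]]]]]]]; [lia|].
      assert (exists w, In w (w0 :: W') /\ ~ In w S) as [w [Iw Nw]].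
      { apply NNPP. intro Hn.
        assert (incl (w0 :: W') S).
        { intros x Hx. apply NNPP. intro. apply Hn. eauto. }
        pose proof (NoDup_incl_length NDW H). lia. }
      destruct (Hlev w Iw) as [v [Iv Pv]].
      destruct (exit_edge E pi S v0 v (Hconn v0 v Iv0 Iv)) as [g [Ig Hg]];
        [rewrite Pv0; auto | rewrite Pv; auto |].
      assert (Ng : ~ In g G).
      { intro Hin. destruct (HG g Hin) as [A [B _]]. tauto. }
      destruct Hg as [[A B]|[A B]].
      + exists (pi (snd g) :: S), (g :: G). repeat split.
        * constructor; auto.
        * simpl; lia.
        * right; auto.
        * constructor; auto.
        * intros x [<-|Hx]; auto.
        * simpl; lia.
        * match goal with H : In _ (g :: G) |- _ => destruct H as [<-|Hg'] end.
          right; auto. right. apply HG; auto.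
        * match goal with H : In _ (g :: G) |- _ => destruct H as [<-|Hg'] end.
          left; auto. right. apply HG; auto.
        * match goal with H : In _ (g :: G) |- _ => destruct H as [<-|Hg'] end.
          intro Heq; rewrite Heq in A; tauto. apply HG; auto.
      + exists (pi (fst g) :: S), (g :: G). repeat split.
        * constructor; auto.
        * simpl; lia.
        * right; auto.
        * constructor; auto.
        * intros x [<-|Hx]; auto.
        * simpl; lia.
        * match goal with H : In _ (g :: G) |- _ => destruct H as [<-|Hg'] end.
          left; auto. right. apply HG; auto.
        * match goal with H : In _ (g :: G) |- _ => destruct H as [<-|Hg'] end.
          right; auto. right. apply HG; auto.
        * match goal with H : In _ (g :: G) |- _ => destruct H as [<-|Hg'] end.
          intro Heq; rewrite Heq in B; tauto. apply HG; auto. }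
  destruct (P (length W')) as [S [G [_ [_ [_ [NDG [IG [LG HG]]]]]]]]; [simpl; lia|].
  exists G. repeat split; auto.
  - simpl; lia.
  - intros g Hg; apply HG; auto.
Qed.


Definition gp (i j : nat) : point := (INR i, INR j).

Lemma gp_inj i j i' j' : gp i j = gp i' j' -> i = i' /\ j = j'.
Proof. unfold gp. intros H. inversion H. split; apply INR_eq; auto. Qed.

Definition Hedge (n : nat) (e : edge) (j : nat) :=
  exists i i', (1 <= i <= n)%nat /\ (1 <= i' <= n)%nat /\ i <> i' /\
    on_segment (gp i j) e /\ on_segment (gp i' j) e.
Definition Vedge (m : nat) (e : edge) (i : nat) :=
  exists j j', (1 <= j <= m)%nat /\ (1 <= j' <= m)%nat /\ j <> j' /\
    on_segment (gp i j) e /\ on_segment (gp i j') e.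

Lemma Hedge_level n e j : Hedge n e j -> snd (fst e) = INR j /\ snd (snd e) = INR j.
Proof.
  intros [i [i' [_ [_ [Ni [O1 O2]]]]]].
  assert (gp i j <> gp i' j) by (intro H; apply gp_inj in H; lia).
  pose proof (seg_horiz _ _ _ O1 O2 H eq_refl) as Hh.
  pose proof (seg_y _ _ O1 Hh). simpl in H0. split; lra.
Qed.

Lemma Vedge_level m e i : Vedge m e i -> fst (fst e) = INR i /\ fst (snd e) = INR i.
Proof.
  intros [j [j' [_ [_ [Nj [O1 O2]]]]]].
  assert (gp i j <> gp i j') by (intro H; apply gp_inj in H; lia).
  pose proof (seg_vert _ _ _ O1 O2 H eq_refl) as Hh.
  pose proof (seg_x _ _ O1 Hh). simpl in H0. split; lra.
Qed.

Lemma Hedge_cov n e j x y : Hedge n e j -> on_segment (gp x y) e -> y = j.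
Proof.
  intros H O. destruct (Hedge_level _ _ _ H) as [A B].
  pose proof (seg_y _ _ O (eq_trans A (eq_sym B))). simpl in H0. apply INR_eq. lra.
Qed.

Lemma Vedge_cov m e i x y : Vedge m e i -> on_segment (gp x y) e -> x = i.
Proof.
  intros H O. destruct (Vedge_level _ _ _ H) as [A B].
  pose proof (seg_x _ _ O (eq_trans A (eq_sym B))). simpl in H0. apply INR_eq. lra.
Qed.

Lemma Hedge_uniq n e j j' : Hedge n e j -> Hedge n e j' -> j = j'.
Proof.
  intros H1 H2. destruct (Hedge_level _ _ _ H1), (Hedge_level _ _ _ H2). apply INR_eq. lra.
Qed.
Lemma Vedge_uniq m e i i' : Vedge m e i -> Vedge m e i' -> i = i'.
Proof.
  intros H1 H2. destruct (Vedge_level _ _ _ H1), (Vedge_level _ _ _ H2). apply INR_eq. lra.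
Qed.

Lemma HV_false n m e j i : Hedge n e j -> Vedge m e i -> False.
Proof.
  intros H1 H2. destruct (Hedge_level _ _ _ H1) as [A B]. destruct (Vedge_level _ _ _ H2) as [C D].
  destruct H1 as [x [x' [_ [_ [Nx [O1 O2]]]]]].
  pose proof (seg_x _ _ O1 (eq_trans C (eq_sym D))).
  pose proof (seg_x _ _ O2 (eq_trans C (eq_sym D))). simpl in *.
  apply Nx. apply INR_eq. lra.
Qed.

Lemma build_levels (E : list edge) (pi : point -> R) (l : list nat) :
  NoDup l ->
  (forall j, In j l -> exists e, In e E /\ pi (fst e) = INR j /\ pi (snd e) = INR j) ->
  exists Hl, NoDup Hl /\ incl Hl E /\ length Hl = length l /\
    forall h, In h Hl -> exists j, In j l /\ pi (fst h) = INR j /\ pi (snd h) = INR j.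
Proof.
  induction l as [|j l IH]; intros ND Hj.
  - exists []. split; [constructor|]. split; [intros x []|]. split; [reflexivity|]. intros h [].
  - inversion ND as [|? ? Nj ND']; subst.
    destruct IH as [Hl [N1 [I1 [L1 P1]]]]; auto.
    { intros j' Hj'. apply Hj. right; auto. }
    destruct (Hj j (or_introl eq_refl)) as [e [Ie [A B]]].
    exists (e :: Hl). split; [|split; [|split]].
    + constructor; auto. intro He. destruct (P1 e He) as [j' [Ij' [C D]]].
      rewrite A in C. apply INR_eq in C. subst. contradiction.
    + intros x [<-|Hx]; auto.
    + simpl; lia.
    + intros h [<-|Hh].
      * exists j. split; [left|]; auto.
      * destruct (P1 h Hh) as [j' [? ?]]. exists j'. split; [right|]; auto.
Qed.

Lemma level_bound (V : list point) (E : list edge) (pi : point -> R) (K : nat) :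
  (forall u v, In u V -> In v V -> clos_refl_trans point (adj E) u v) ->
  (forall e, In e E -> In (fst e) V) -> NoDup E -> (1 <= K)%nat ->
  (forall j, (1 <= j <= K)%nat -> exists e, In e E /\ pi (fst e) = INR j /\ pi (snd e) = INR j) ->
  (2 * K - 1 <= length E)%nat.
Proof.
  intros Hconn HV NDE HK Hj.
  assert (NDs : NoDup (seq 1 K)) by apply seq_NoDup.
  destruct (build_levels E pi (seq 1 K) NDs) as [Hl [N1 [I1 [L1 P1]]]].
  { intros j Ij. apply in_seq in Ij. apply Hj. lia. }
  destruct (levels_conn V E pi (map INR (seq 1 K)) Hconn) as [G [NG [IG [LG PG]]]].
  - apply Injective_map_NoDup; auto. intros x y; apply INR_eq.
  - destruct K; [lia|]. simpl. discriminate.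
  - intros w Hw. apply in_map_iff in Hw. destruct Hw as [j [<- Ij]].
    apply in_seq in Ij. destruct (Hj j ltac:(lia)) as [e [Ie [A B]]].
    exists (fst e). split; auto.
  - rewrite length_map, length_seq in LG. rewrite length_seq in L1.
    assert (ND : NoDup (Hl ++ G)).
    { apply NoDup_app; auto. intros h Hh HG.
      destruct (P1 h Hh) as [j [_ [A B]]]. apply (PG h HG). congruence. }
    assert (incl (Hl ++ G) E) by (intros x Hx; apply in_app_or in Hx; destruct Hx; auto).
    pose proof (NoDup_incl_length ND H). rewrite length_app in H0. lia.
Qed.


Definition goodrow n (E : list edge) j := exists e, In e E /\ Hedge n e j.
Definition goodcol m (E : list edge) i := exists e, In e E /\ Vedge m e i.
Definition R0 n m E := filter (fun j => negb (dec (goodrow n E j))) (seq 1 m).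
Definition Rg n m E := filter (fun j => dec (goodrow n E j)) (seq 1 m).
Definition C0 n m E := filter (fun i => negb (dec (goodcol m E i))) (seq 1 n).
Definition Cg n m E := filter (fun i => dec (goodcol m E i)) (seq 1 n).

Lemma R0_in n m E j : In j (R0 n m E) <-> (1 <= j <= m)%nat /\ ~ goodrow n E j.
Proof.
  unfold R0. rewrite filter_In, in_seq, Bool.negb_true_iff, dec_false.
  split; intros [A B]; split; auto; lia.
Qed.
Lemma Rg_in n m E j : In j (Rg n m E) <-> (1 <= j <= m)%nat /\ goodrow n E j.
Proof.
  unfold Rg. rewrite filter_In, in_seq, dec_true.
  split; intros [A B]; split; auto; lia.
Qed.
Lemma C0_in n m E i : In i (C0 n m E) <-> (1 <= i <= n)%nat /\ ~ goodcol m E i.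
Proof.
  unfold C0. rewrite filter_In, in_seq, Bool.negb_true_iff, dec_false.
  split; intros [A B]; split; auto; lia.
Qed.
Lemma Cg_in n m E i : In i (Cg n m E) <-> (1 <= i <= n)%nat /\ goodcol m E i.
Proof.
  unfold Cg. rewrite filter_In, in_seq, dec_true.
  split; intros [A B]; split; auto; lia.
Qed.
Lemma R_len n m E : (length (R0 n m E) + length (Rg n m E) = m)%nat.
Proof.
  unfold R0, Rg. pose proof (filter_part (fun j => dec (goodrow n E j)) (seq 1 m)) as H.
  rewrite length_seq in H. cbv beta in H. lia.
Qed.
Lemma C_len n m E : (length (C0 n m E) + length (Cg n m E) = n)%nat.
Proof.
  unfold C0, Cg. pose proof (filter_part (fun j => dec (goodcol m E j)) (seq 1 n)) as H.
  rewrite length_seq in H. cbv beta in H. lia.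
Qed.
Lemma R0_nd n m E : NoDup (R0 n m E).
Proof. apply NoDup_filter, seq_NoDup. Qed.
Lemma Rg_nd n m E : NoDup (Rg n m E).
Proof. apply NoDup_filter, seq_NoDup. Qed.
Lemma C0_nd n m E : NoDup (C0 n m E).
Proof. apply NoDup_filter, seq_NoDup. Qed.
Lemma Cg_nd n m E : NoDup (Cg n m E).
Proof. apply NoDup_filter, seq_NoDup. Qed.

Definition tok := (nat * nat * nat)%type.

Definition dbl {A} (f g : A -> tok) (l : list A) : list tok := flat_map (fun u => [f u; g u]) l.

Lemma dbl_in {A} (f g : A -> tok) l tk : In tk (dbl f g l) <-> exists u, In u l /\ (tk = f u \/ tk = g u).
Proof.
  unfold dbl. rewrite in_flat_map. split.
  - intros [u [Hu Ht]]. exists u. split; auto. simpl in Ht. intuition.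
  - intros [u [Hu Ht]]. exists u. split; auto. simpl. intuition.
Qed.

Lemma dbl_len {A} (f g : A -> tok) l : length (dbl f g l) = (2 * length l)%nat.
Proof. unfold dbl. induction l; simpl; auto. rewrite IHl. lia. Qed.

Lemma dbl_nd {A} (f g : A -> tok) (l : list A) : NoDup l ->
  (forall x y, f x = f y -> x = y) -> (forall x y, g x = g y -> x = y) ->
  (forall x y, f x <> g y) -> NoDup (dbl f g l).
Proof.
  intros ND Hf Hg Hfg. induction ND as [|a l Na ND IH]; [constructor|].
  change (NoDup ([f a; g a] ++ dbl f g l)). apply NoDup_app; auto.
  - constructor; [intros [H|[]]; exact (Hfg a a (eq_sym H))|constructor; [intros []|constructor]].
  - intros tk Htk Hin. apply dbl_in in Hin. destruct Hin as [u [Hu Hu']].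
    assert (u <> a) by (intro; subst; contradiction).
    destruct Htk as [<-|[<-|[]]]; destruct Hu' as [Hu'|Hu'].
    + apply H. symmetry; auto.
    + exact (Hfg _ _ Hu').
    + exact (Hfg _ _ (eq_sym Hu')).
    + apply H. symmetry; auto.
Qed.

Definition pairs (t : nat) (l : list nat) : list tok :=
  dbl (fun j => (t, j, 0%nat)) (fun j => (t, j, 1%nat)) l.

Lemma pairs_nd t l : NoDup l -> NoDup (pairs t l).
Proof.
  intros ND. apply dbl_nd; auto; intros x y Hxy; inversion Hxy; auto.
Qed.

Definition Rel n m (tk : tok) (e : edge) : Prop :=
  let '(t, u, v) := tk in
  if Nat.eqb t 0 then Hedge n e u else if Nat.eqb t 1 then Vedge m e u
  else on_segment (gp u v) e.

Lemma Rel_big n m t u v e : (2 <= t)%nat -> Rel n m (t,u,v) e <-> on_segment (gp u v) e.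
Proof.
  intros Ht. simpl. destruct (Nat.eqb_spec t 0); [lia|]. destruct (Nat.eqb_spec t 1); [lia|].
  tauto.
Qed.

Definition Btok_ok n m E (Bt : list tok) :=
  forall tk, In tk Bt -> exists t x y, tk = (t,x,y) /\ (2 <= t)%nat /\
     In x (C0 n m E) /\ In y (R0 n m E).

Definition toks n m E (Bt : list tok) := pairs 0 (Rg n m E) ++ pairs 1 (Cg n m E) ++ Bt.

Lemma toks_len n m E Bt : length (toks n m E Bt) =
   (2 * length (Rg n m E) + 2 * length (Cg n m E) + length Bt)%nat.
Proof. unfold toks, pairs. rewrite !length_app, !dbl_len. lia. Qed.

Lemma count_setup n m V E (Bt : list tok) :
  geometric_tree V E -> covers_grid E n m ->
  NoDup Bt -> Btok_ok n m E Bt ->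
  (forall e, In e E -> (forall j, ~ Hedge n e j) -> (forall i, ~ Vedge m e i) ->
     forall S, NoDup S -> (forall x, In x S -> In x Bt /\ Rel n m x e) -> (length S <= 2)%nat) ->
  NoDup (toks n m E Bt) /\ (forall x, In x (toks n m E Bt) -> exists e, In e E /\ Rel n m x e) /\
  (forall e, In e E -> forall S, NoDup S ->
     (forall x, In x S -> In x (toks n m E Bt) /\ Rel n m x e) -> (length S <= 2)%nat).
Proof.
  intros Htree Hcov NDB HB HF. unfold toks.
  split; [|split].
  - apply NoDup_app; [apply pairs_nd, Rg_nd|apply NoDup_app; [apply pairs_nd, Cg_nd|auto|]|].
    + intros tk H1 H2. apply dbl_in in H1. destruct H1 as [u [_ Hu]].
      destruct (HB tk H2) as [t [x [y [-> [Ht _]]]]].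
      destruct Hu as [Hu|Hu]; inversion Hu; lia.
    + intros tk H1 H2. apply dbl_in in H1. destruct H1 as [u [_ Hu]].
      apply in_app_or in H2. destruct H2 as [H2|H2].
      * apply dbl_in in H2. destruct H2 as [u' [_ Hu']].
        destruct Hu as [-> | ->]; destruct Hu' as [Hu'|Hu']; inversion Hu'.
      * destruct (HB tk H2) as [t [x [y [-> [Ht _]]]]].
        destruct Hu as [Hu|Hu]; inversion Hu; lia.
  - intros tk Htk. apply in_app_or in Htk. destruct Htk as [Htk|Htk].
    { apply dbl_in in Htk. destruct Htk as [j [Hj Hu]]. apply Rg_in in Hj.
      destruct Hj as [_ [e [Ie He]]]. exists e. split; auto.
      destruct Hu as [-> | ->]; simpl; auto. }
    apply in_app_or in Htk. destruct Htk as [Htk|Htk].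
    { apply dbl_in in Htk. destruct Htk as [j [Hj Hu]]. apply Cg_in in Hj.
      destruct Hj as [_ [e [Ie He]]]. exists e. split; auto.
      destruct Hu as [-> | ->]; simpl; auto. }
    destruct (HB tk Htk) as [t [x [y [-> [Ht [Hx Hy]]]]]].
    apply C0_in in Hx. apply R0_in in Hy.
    destruct (Hcov x y ltac:(lia) ltac:(lia)) as [e [Ie Oe]].
    exists e. split; auto. apply Rel_big; auto.
  - intros e Ie S NDS HS.
    destruct (classic (exists j, Hedge n e j)) as [[j Hj]|NH].
    { assert (incl S [(0,j,0);(0,j,1)]%nat).
      { intros tk Htk. destruct (HS tk Htk) as [Hin Hr].
        apply in_app_or in Hin. destruct Hin as [Hin|Hin].
        - apply dbl_in in Hin. destruct Hin as [u [_ [-> | ->]]]; simpl in Hr;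
          rewrite (Hedge_uniq _ _ _ _ Hr Hj); simpl; auto.
        - apply in_app_or in Hin. destruct Hin as [Hin|Hin].
          + apply dbl_in in Hin. destruct Hin as [u [_ [-> | ->]]]; simpl in Hr;
            destruct (HV_false _ _ _ _ _ Hj Hr).
          + destruct (HB tk Hin) as [t [x [y [-> [Ht [Hx Hy]]]]]].
            apply Rel_big in Hr; auto. pose proof (Hedge_cov _ _ _ _ _ Hj Hr). subst y.
            apply R0_in in Hy. exfalso. apply (proj2 Hy). exists e; auto. }
      pose proof (NoDup_incl_length NDS H). simpl in H0. lia. }
    destruct (classic (exists i, Vedge m e i)) as [[i Hi]|NV].
    { assert (incl S [(1,i,0);(1,i,1)]%nat).
      { intros tk Htk. destruct (HS tk Htk) as [Hin Hr].
        apply in_app_or in Hin. destruct Hin as [Hin|Hin].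
        - apply dbl_in in Hin. destruct Hin as [u [_ [-> | ->]]]; simpl in Hr;
          destruct (HV_false _ _ _ _ _ Hr Hi).
        - apply in_app_or in Hin. destruct Hin as [Hin|Hin].
          + apply dbl_in in Hin. destruct Hin as [u [_ [-> | ->]]]; simpl in Hr;
            rewrite (Vedge_uniq _ _ _ _ Hr Hi); simpl; auto.
          + destruct (HB tk Hin) as [t [x [y [-> [Ht [Hx Hy]]]]]].
            apply Rel_big in Hr; auto. pose proof (Vedge_cov _ _ _ _ _ Hi Hr). subst x.
            apply C0_in in Hx. exfalso. apply (proj2 Hx). exists e; auto. }
      pose proof (NoDup_incl_length NDS H). simpl in H0. lia. }
    apply (HF e Ie (fun j H => NH (ex_intro _ j H)) (fun i H => NV (ex_intro _ i H)) S NDS).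
    intros tk Htk. destruct (HS tk Htk) as [Hin Hr]. split; auto.
    apply in_app_or in Hin. destruct Hin as [Hin|Hin].
    + apply dbl_in in Hin. destruct Hin as [u [_ [-> | ->]]]; simpl in Hr;
      exfalso; apply NH; eauto.
    + apply in_app_or in Hin. destruct Hin as [Hin|Hin]; auto.
      apply dbl_in in Hin. destruct Hin as [u [_ [-> | ->]]]; simpl in Hr;
      exfalso; apply NV; eauto.
Qed.


Lemma tree_parts V E : geometric_tree V E ->
  NoDup E /\ (forall e, In e E -> In (fst e) V /\ In (snd e) V /\ fst e <> snd e) /\
  (forall u v, In u V -> In v V -> clos_refl_trans point (adj E) u v).
Proof. intros [_ [_ [HE [NDE [_ [Hc _]]]]]]. auto. Qed.

Lemma case_row0 n m V E : geometric_tree V E -> (1 <= m)%nat -> R0 n m E = [] ->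
  (2 * m - 1 <= length E)%nat.
Proof.
  intros Ht Hm HR. destruct (tree_parts V E Ht) as [NDE [HE Hconn]].
  apply (level_bound V E snd m Hconn); auto.
  - intros e Ie. apply HE; auto.
  - intros j Hj. assert (goodrow n E j) as [e [Ie He]].
    { apply NNPP. intro. assert (In j (R0 n m E)) by (apply R0_in; auto).
      rewrite HR in H0. destruct H0. }
    exists e. split; auto. apply Hedge_level in He. tauto.
Qed.

Lemma case_col0 n m V E : geometric_tree V E -> (1 <= n)%nat -> C0 n m E = [] ->
  (2 * n - 1 <= length E)%nat.
Proof.
  intros Ht Hm HR. destruct (tree_parts V E Ht) as [NDE [HE Hconn]].
  apply (level_bound V E fst n Hconn); auto.
  - intros e Ie. apply HE; auto.
  - intros j Hj. assert (goodcol m E j) as [e [Ie He]].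
    { apply NNPP. intro. assert (In j (C0 n m E)) by (apply C0_in; auto).
      rewrite HR in H0. destruct H0. }
    exists e. split; auto. apply Vedge_level in He. tauto.
Qed.

Lemma case_colA n m V E x0 : geometric_tree V E -> covers_grid E n m ->
  C0 n m E = [x0] -> (n + m - 1 <= length E)%nat.
Proof.
  intros Ht Hcov HC. destruct (tree_parts V E Ht) as [NDE [HE Hconn]].
  set (Bt := dbl (fun y => (2%nat,x0,y)) (fun y => (3%nat,x0,y)) (R0 n m E)).
  assert (HX : In x0 (C0 n m E)) by (rewrite HC; left; auto).
  destruct (count_setup n m V E Bt Ht Hcov) as [ND [Hc Hf]].
  - apply dbl_nd; [apply R0_nd| | |]; intros x y Hxy; inversion Hxy; auto.
  - intros tk Htk. apply dbl_in in Htk. destruct Htk as [y [Hy [-> | ->]]].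
    + exists 2%nat, x0, y. auto.
    + exists 3%nat, x0, y. auto.
  - intros e Ie NH NV S NDS HS.
    destruct S as [|tk S]; simpl; [lia|].
    destruct (HS tk (or_introl eq_refl)) as [Hin Hr].
    apply dbl_in in Hin. destruct Hin as [y [Hy Htk]].
    assert (Hcy : on_segment (gp x0 y) e) by (destruct Htk as [-> | ->]; apply Rel_big in Hr; auto).
    assert (incl (tk :: S) [(2%nat,x0,y); (3%nat,x0,y)]).
    { intros tk' Htk'. destruct (HS tk' Htk') as [Hin' Hr'].
      apply dbl_in in Hin'. destruct Hin' as [y' [Hy' Ht2]].
      assert (Hcy' : on_segment (gp x0 y') e)
        by (destruct Ht2 as [-> | ->]; apply Rel_big in Hr'; auto).
      destruct (Nat.eq_dec y y') as [<-|Ny].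
      - destruct Ht2 as [-> | ->]; simpl; auto.
      - exfalso. apply (NV x0). apply R0_in in Hy. apply R0_in in Hy'.
        exists y, y'. repeat split; auto; lia. }
    pose proof (NoDup_incl_length NDS H). simpl in *. lia.
  - pose proof (count2 _ E _ ND Hc Hf) as Hcnt.
    rewrite toks_len in Hcnt. unfold Bt in Hcnt. rewrite dbl_len in Hcnt.
    pose proof (R_len n m E). pose proof (C_len n m E). rewrite HC in H0. simpl in H0.
    lia.
Qed.

Lemma case_rowB n m V E y0 : geometric_tree V E -> covers_grid E n m ->
  R0 n m E = [y0] -> (n + m - 1 <= length E)%nat.
Proof.
  intros Ht Hcov HC. destruct (tree_parts V E Ht) as [NDE [HE Hconn]].
  set (Bt := dbl (fun x => (2%nat,x,y0)) (fun x => (3%nat,x,y0)) (C0 n m E)).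
  assert (HX : In y0 (R0 n m E)) by (rewrite HC; left; auto).
  destruct (count_setup n m V E Bt Ht Hcov) as [ND [Hc Hf]].
  - apply dbl_nd; [apply C0_nd| | |]; intros x y Hxy; inversion Hxy; auto.
  - intros tk Htk. apply dbl_in in Htk. destruct Htk as [x [Hx [-> | ->]]].
    + exists 2%nat, x, y0. auto.
    + exists 3%nat, x, y0. auto.
  - intros e Ie NH NV S NDS HS.
    destruct S as [|tk S]; simpl; [lia|].
    destruct (HS tk (or_introl eq_refl)) as [Hin Hr].
    apply dbl_in in Hin. destruct Hin as [x [Hx Htk]].
    assert (Hcy : on_segment (gp x y0) e) by (destruct Htk as [-> | ->]; apply Rel_big in Hr; auto).
    assert (incl (tk :: S) [(2%nat,x,y0); (3%nat,x,y0)]).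
    { intros tk' Htk'. destruct (HS tk' Htk') as [Hin' Hr'].
      apply dbl_in in Hin'. destruct Hin' as [x' [Hx' Ht2]].
      assert (Hcy' : on_segment (gp x' y0) e)
        by (destruct Ht2 as [-> | ->]; apply Rel_big in Hr'; auto).
      destruct (Nat.eq_dec x x') as [<-|Nx].
      - destruct Ht2 as [-> | ->]; simpl; auto.
      - exfalso. apply (NH y0). apply C0_in in Hx. apply C0_in in Hx'.
        exists x, x'. repeat split; auto; lia. }
    pose proof (NoDup_incl_length NDS H). simpl in *. lia.
  - pose proof (count2 _ E _ ND Hc Hf) as Hcnt.
    rewrite toks_len in Hcnt. unfold Bt in Hcnt. rewrite dbl_len in Hcnt.
    pose proof (R_len n m E). pose proof (C_len n m E). rewrite HC in H. simpl in H.
    lia.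
Qed.


Lemma list_min (l : list nat) : l <> [] -> exists x, In x l /\ forall y, In y l -> (x <= y)%nat.
Proof.
  induction l as [|a l IH]; intros Hn; [congruence|].
  destruct l as [|b l].
  - exists a. split; [left; auto|]. intros y [<-|[]]; lia.
  - destruct IH as [x [Hx Hm]]; [discriminate|].
    destruct (le_lt_dec a x).
    + exists a. split; [left; auto|]. intros y [<-|Hy]; [lia|]. specialize (Hm y Hy). lia.
    + exists x. split; [right; auto|]. intros y [<-|Hy]; [lia|]. auto.
Qed.

Lemma list_max (l : list nat) : l <> [] -> exists x, In x l /\ forall y, In y l -> (y <= x)%nat.
Proof.
  induction l as [|a l IH]; intros Hn; [congruence|].
  destruct l as [|b l].
  - exists a. split; [left; auto|]. intros y [<-|[]]; lia.
  - destruct IH as [x [Hx Hm]]; [discriminate|].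
    destruct (le_lt_dec x a).
    + exists a. split; [left; auto|]. intros y [<-|Hy]; [lia|]. specialize (Hm y Hy). lia.
    + exists x. split; [right; auto|]. intros y [<-|Hy]; [lia|]. auto.
Qed.

Lemma extremes (l : list nat) : NoDup l -> (2 <= length l)%nat ->
  exists lo hi inner, In lo l /\ In hi l /\ (lo < hi)%nat /\
   (forall x, In x l -> lo <= x <= hi)%nat /\ NoDup inner /\
   (forall x, In x inner <-> In x l /\ (lo < x < hi)%nat) /\ (length inner + 2 = length l)%nat.
Proof.
  intros ND Hl.
  assert (Hne : l <> []) by (intro; subst; simpl in Hl; lia).
  destruct (list_min l Hne) as [lo [Ilo Hlo]].
  destruct (list_max l Hne) as [hi [Ihi Hhi]].
  assert (Hlt : (lo < hi)%nat).
  { destruct (Nat.lt_ge_cases lo hi); auto.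
    assert (incl l [lo]).
    { intros x Hx. specialize (Hlo x Hx). specialize (Hhi x Hx). left. lia. }
    pose proof (NoDup_incl_length ND H0). simpl in *. lia. }
  set (f := fun x => andb (Nat.ltb lo x) (Nat.ltb x hi)).
  exists lo, hi, (filter f l). split; [|split; [|split; [|split; [|split; [|split]]]]].
  - auto.
  - auto.
  - auto.
  - intros x Hx. split; auto.
  - apply NoDup_filter; auto.
  - intros x. rewrite filter_In. unfold f. rewrite Bool.andb_true_iff, !Nat.ltb_lt. tauto.
  - pose proof (filter_part f l) as Hp. cbv beta in Hp.
    assert (H2 : length (filter (fun x => negb (f x)) l) = 2%nat).
    { apply Nat.le_antisymm.
      - assert (incl (filter (fun x => negb (f x)) l) [lo; hi]).
        { intros x Hx. apply filter_In in Hx. destruct Hx as [Hx Hf].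
          unfold f in Hf. apply Bool.negb_true_iff, Bool.andb_false_iff in Hf.
          rewrite !Nat.ltb_ge in Hf. specialize (Hlo x Hx). specialize (Hhi x Hx).
          destruct Hf; [left|right; left]; lia. }
        pose proof (NoDup_incl_length (NoDup_filter _ ND) H). simpl in H0. lia.
      - assert (incl [lo; hi] (filter (fun x => negb (f x)) l)).
        { intros x [<-|[<-|[]]]; apply filter_In; split; auto; unfold f;
          apply Bool.negb_true_iff, Bool.andb_false_iff; rewrite !Nat.ltb_ge; lia. }
        assert (NoDup [lo; hi]) by (constructor; [intros [H'|[]]; lia|constructor; [intros []|constructor]]).
        pose proof (NoDup_incl_length H0 H). simpl in H1. lia. }
    lia.
Qed.

Lemma map_nd {A B} (f : A -> B) l : NoDup l -> (forall x y, f x = f y -> x = y) -> NoDup (map f l).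
Proof. intros. apply Injective_map_NoDup; auto. Qed.

Lemma diffC n m E e (p q : nat * nat) : In e E ->
  In (fst p) (C0 n m E) -> In (snd p) (R0 n m E) ->
  In (fst q) (C0 n m E) -> In (snd q) (R0 n m E) -> p <> q ->
  on_segment (gp (fst p) (snd p)) e -> on_segment (gp (fst q) (snd q)) e ->
  fst p <> fst q /\ snd p <> snd q.
Proof.
  intros Ie Cp Rp Cq Rq Npq Op Oq.
  destruct p as [px py], q as [qx qy]; simpl in *.
  apply C0_in in Cp. apply C0_in in Cq. apply R0_in in Rp. apply R0_in in Rq.
  split; intro Heq; subst.
  - apply (proj2 Cp). exists e. split; auto. exists py, qy. repeat split; try lia.
    + intro; subst; auto.
    + auto.
    + auto.
  - apply (proj2 Rp). exists e. split; auto. exists px, qx. repeat split; try lia.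
    + intro; subst; auto.
    + auto.
    + auto.
Qed.


Lemma pair_eq (p q : nat * nat) : fst p = fst q -> snd p = snd q -> p = q.
Proof. destruct p, q; simpl; intros; subst; auto. Qed.

Lemma in_toks_B n m E Bt tk : In tk Bt -> In tk (toks n m E Bt).
Proof. intros. unfold toks. apply in_app_iff; right; apply in_app_iff; right; auto. Qed.

Lemma toks_rel_B n m E Bt tk e x y :
  In tk (toks n m E Bt) -> Rel n m tk e -> on_segment (gp x y) e -> In y (R0 n m E) ->
  In x (C0 n m E) -> In e E -> In tk Bt.
Proof.
  intros Hin Hr Ho Hy Hx Ie. unfold toks in Hin.
  apply in_app_or in Hin. destruct Hin as [Hin|Hin].
  - apply dbl_in in Hin. destruct Hin as [j [_ [-> | ->]]]; simpl in Hr;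
    pose proof (Hedge_cov _ _ _ _ _ Hr Ho); subst j;
    apply R0_in in Hy; exfalso; apply (proj2 Hy); exists e; auto.
  - apply in_app_or in Hin. destruct Hin as [Hin|Hin]; auto.
    apply dbl_in in Hin. destruct Hin as [j [_ [-> | ->]]]; simpl in Hr;
    pose proof (Vedge_cov _ _ _ _ _ Hr Ho); subst j;
    apply C0_in in Hx; exfalso; apply (proj2 Hx); exists e; auto.
Qed.

Lemma case_C n m V E : geometric_tree V E -> covers_grid E n m ->
  (2 <= length (C0 n m E))%nat -> (2 <= length (R0 n m E))%nat ->
  (n + m - 2 <= length E)%nat /\
  ((length E <= n + m - 2)%nat ->
    exists x0 x1 y0 y1 (Bl : list point),
     x0 < x1 /\ y0 < y1 /\ (forall z, In z Bl -> bd x0 x1 y0 y1 z) /\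
     In (x0,y0) Bl /\ In (x0,y1) Bl /\ In (x1,y0) Bl /\ In (x1,y1) Bl /\
     (forall z, In z Bl -> exists t e, In t Bl /\ In e E /\ t <> z /\
        on_segment z e /\ on_segment t e) /\
     (forall e p q, In e E -> In p Bl -> In q Bl -> p <> q -> on_segment p e ->
        on_segment q e -> fst p <> fst q /\ snd p <> snd q) /\
     (forall z e e', In z Bl -> In e E -> In e' E -> on_segment z e ->
        on_segment z e' -> e = e') /\
     (forall z, In z Bl -> exists x y, z = gp x y /\ (1 <= x <= n)%nat /\ (1 <= y <= m)%nat)).
Proof.
  intros Ht Hcov Ha Hb. destruct (tree_parts V E Ht) as [NDE [HE Hconn]].
  destruct (extremes (C0 n m E) (C0_nd n m E) Ha)
    as [lo [hi [Cin [Ilo [Ihi [Hlh [Hrange [NDin [Hin Hlen]]]]]]]]].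
  destruct (extremes (R0 n m E) (R0_nd n m E) Hb)
    as [ylo [yhi [Rin [Iylo [Iyhi [Hylh [Hyrange [_ [_ _]]]]]]]]].
  set (R := R0 n m E) in *. set (Cc := C0 n m E) in *.
  set (Bp := map (fun y => (lo,y)) R ++ map (fun y => (hi,y)) R ++
             map (fun x => (x,ylo)) Cin ++ map (fun x => (x,yhi)) Cin).
  assert (Bp_in : forall p, In p Bp -> In (fst p) Cc /\ In (snd p) R /\
     (fst p = lo \/ fst p = hi \/ snd p = ylo \/ snd p = yhi)).
  { intros p Hp. unfold Bp in Hp. rewrite !in_app_iff, !in_map_iff in Hp.
    destruct Hp as [[y [<- Hy]]|[[y [<- Hy]]|[[x [<- Hx]]|[x [<- Hx]]]]]; simpl;
    try (apply Hin in Hx; destruct Hx); auto 7. }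
  assert (NDBp : NoDup Bp).
  { assert (Hinj1 : forall a : nat, (forall x y : nat, (a, x) = (a, y) -> x = y))
      by (intros a x y H; inversion H; auto).
    assert (Hinj2 : forall a : nat, (forall x y : nat, (x, a) = (y, a) -> x = y))
      by (intros a x y H; inversion H; auto).
    unfold Bp. apply NoDup_app; [apply map_nd; [apply R0_nd|apply Hinj1]|apply NoDup_app; [apply map_nd; [apply R0_nd|apply Hinj1]|apply NoDup_app; [apply map_nd; [auto|apply Hinj2]|apply map_nd; [auto|apply Hinj2]|]|]|].
    - intros p Hp1 Hp2. apply in_map_iff in Hp1. apply in_map_iff in Hp2.
      destruct Hp1 as [x [<- _]], Hp2 as [x' [He _]]. inversion He; lia.
    - intros p Hp1 Hp2. apply in_map_iff in Hp1. destruct Hp1 as [y [<- _]].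
      rewrite in_app_iff, !in_map_iff in Hp2.
      destruct Hp2 as [[x [He Hx]]|[x [He Hx]]]; inversion He; subst;
      apply Hin in Hx; lia.
    - intros p Hp1 Hp2. apply in_map_iff in Hp1. destruct Hp1 as [y [<- _]].
      rewrite !in_app_iff, !in_map_iff in Hp2.
      destruct Hp2 as [[x [He Hx]]|[[x [He Hx]]|[x [He Hx]]]]; inversion He; subst; try lia;
      apply Hin in Hx; lia. }
  assert (LBp : (length Bp = 2 * length R + 2 * length Cin)%nat).
  { unfold Bp. rewrite !length_app, !length_map. lia. }
  assert (bdP : forall p, In p Bp ->
     bd (INR lo) (INR hi) (INR ylo) (INR yhi) (gp (fst p) (snd p))).
  { intros p Hp. destruct (Bp_in p Hp) as [Hx [Hy Hs]].
    destruct (Hrange _ Hx), (Hyrange _ Hy).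
    split; [split; split; simpl; apply le_INR; auto|].
    simpl. destruct Hs as [-> |[-> |[-> | ->]]]; auto. }
  assert (Bp_diff : forall e p q, In e E -> In p Bp -> In q Bp -> p <> q ->
     on_segment (gp (fst p) (snd p)) e -> on_segment (gp (fst q) (snd q)) e ->
     fst p <> fst q /\ snd p <> snd q).
  { intros e p q Ie Hp Hq Npq Op Oq.
    destruct (Bp_in p Hp) as [? [? _]], (Bp_in q Hq) as [? [? _]].
    apply (diffC n m E e); auto. }
  set (Bt := map (fun p : nat * nat => (2%nat, fst p, snd p)) Bp).
  assert (Bt_in : forall tk, In tk Bt -> exists p, In p Bp /\ tk = (2%nat, fst p, snd p)).
  { intros tk Htk. apply in_map_iff in Htk. destruct Htk as [p [<- Hp]]. eauto. }
  destruct (count_setup n m V E Bt Ht Hcov) as [ND [Hc Hf]].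
  - apply map_nd; auto. intros p q H. inversion H. apply pair_eq; auto.
  - intros tk Htk. destruct (Bt_in tk Htk) as [p [Hp ->]].
    destruct (Bp_in p Hp) as [? [? _]]. exists 2%nat, (fst p), (snd p). auto.
  - intros e Ie NH NV S NDS HS.
    destruct S as [|t1 [|t2 [|t3 S']]]; simpl; try lia. exfalso.
    inversion NDS as [|? ? N1 NDS1]; subst. inversion NDS1 as [|? ? N2 _]; subst.
    destruct (HS t1 ltac:(simpl; auto)) as [I1 R1].
    destruct (HS t2 ltac:(simpl; auto)) as [I2 R2].
    destruct (HS t3 ltac:(simpl; auto)) as [I3 R3].
    destruct (Bt_in t1 I1) as [p1 [Hp1 ->]]. destruct (Bt_in t2 I2) as [p2 [Hp2 ->]].
    destruct (Bt_in t3 I3) as [p3 [Hp3 ->]].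
    apply Rel_big in R1; auto. apply Rel_big in R2; auto. apply Rel_big in R3; auto.
    assert (N12 : p1 <> p2) by (intro; subst; apply N1; simpl; auto).
    assert (N13 : p1 <> p3) by (intro; subst; apply N1; simpl; auto).
    assert (N23 : p2 <> p3) by (intro; subst; apply N2; simpl; auto).
    assert (Hgp : forall p q : nat * nat, p <> q -> gp (fst p) (snd p) <> gp (fst q) (snd q))
      by (intros p q Npq Hg; apply gp_inj in Hg; apply Npq; apply pair_eq; tauto).
    destruct (fib3 _ _ _ _ _ _ _ e (bdP p1 Hp1) (bdP p2 Hp2) (bdP p3 Hp3) (Hgp _ _ N12)
                (Hgp _ _ (not_eq_sym N13)) (Hgp _ _ (not_eq_sym N23)) R1 R2 R3) as [Hq|Hq];
    simpl in Hq; apply INR_eq in Hq; destruct (Bp_diff e p1 p2 Ie Hp1 Hp2 N12 R1 R2); auto.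
  - pose proof (count2 _ E _ ND Hc Hf) as Hcnt.
    rewrite toks_len in Hcnt. unfold Bt in Hcnt. rewrite length_map, LBp in Hcnt.
    pose proof (R_len n m E). pose proof (C_len n m E). fold R Cc in H, H0.
    split; [lia|].
    intros Hk.
    destruct (tight _ E _ ND NDE Hc Hf) as [Ta Tb].
    { rewrite toks_len. unfold Bt. rewrite length_map, LBp. lia. }
    set (Bl := map (fun p : nat * nat => gp (fst p) (snd p)) Bp).
    assert (Bl_in : forall z, In z Bl -> exists p, In p Bp /\ z = gp (fst p) (snd p)).
    { intros z Hz. apply in_map_iff in Hz. destruct Hz as [p [<- Hp]]. eauto. }
    assert (corn : forall x y, In (x,y) Bp -> In (INR x, INR y) Bl).
    { intros x y H1. apply in_map_iff. exists (x,y). split; auto. }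
    exists (INR lo), (INR hi), (INR ylo), (INR yhi), Bl.
    split; [apply lt_INR; auto|]. split; [apply lt_INR; auto|].
    split; [intros z Hz; destruct (Bl_in z Hz) as [p [Hp ->]]; auto|].
    split; [apply corn; unfold Bp; apply in_app_iff; left; apply in_map_iff; eauto|].
    split; [apply corn; unfold Bp; apply in_app_iff; left; apply in_map_iff; eauto|].
    split; [apply corn; unfold Bp; apply in_app_iff; right; apply in_app_iff; left;
            apply in_map_iff; eauto|].
    split; [apply corn; unfold Bp; apply in_app_iff; right; apply in_app_iff; left;
            apply in_map_iff; eauto|].
    split; [|split; [|split]].
    + intros z Hz. destruct (Bl_in z Hz) as [p [Hp ->]].
      destruct (Bp_in p Hp) as [Hx [Hy _]].
      pose proof Hx as Hx'. pose proof Hy as Hy'.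
      apply C0_in in Hx'. apply R0_in in Hy'.
      destruct (Hcov (fst p) (snd p) ltac:(lia) ltac:(lia)) as [e [Ie Oe]].
      fold (gp (fst p) (snd p)) in Oe.
      destruct (Ta e Ie) as [k1 [k2 [Ik1 [Ik2 [Nk [Rk1 Rk2]]]]]].
      assert (Hk1 := toks_rel_B _ _ _ _ _ _ _ _ Ik1 Rk1 Oe Hy Hx Ie).
      assert (Hk2 := toks_rel_B _ _ _ _ _ _ _ _ Ik2 Rk2 Oe Hy Hx Ie).
      destruct (Bt_in _ Hk1) as [q1 [Hq1 ->]]. destruct (Bt_in _ Hk2) as [q2 [Hq2 ->]].
      apply Rel_big in Rk1; auto. apply Rel_big in Rk2; auto.
      destruct (classic (q1 = p)) as [E1|E1].
      * subst q1. exists (gp (fst q2) (snd q2)), e. split; [apply in_map_iff; eauto|].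
        split; auto. split; auto. intro Hg. apply gp_inj in Hg. apply Nk.
        destruct Hg as [A1 A2]; rewrite A1, A2; reflexivity.
      * exists (gp (fst q1) (snd q1)), e. split; [apply in_map_iff; eauto|].
        split; auto. split; auto. intro Hg. apply gp_inj in Hg. apply E1.
        apply pair_eq; tauto.
    + intros e z1 z2 Ie Hz1 Hz2 Nz O1 O2.
      destruct (Bl_in z1 Hz1) as [p1 [Hp1 ->]]. destruct (Bl_in z2 Hz2) as [p2 [Hp2 ->]].
      assert (p1 <> p2) by (intro; subst; auto).
      destruct (Bp_diff e p1 p2 Ie Hp1 Hp2 H1 O1 O2) as [D1 D2].
      simpl. split; intro Hq; apply INR_eq in Hq; auto.
    + intros z e e' Hz Ie Ie' O1 O2. destruct (Bl_in z Hz) as [p [Hp ->]].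
      apply (Tb (2%nat, fst p, snd p)); auto.
      apply in_toks_B. apply in_map_iff. eauto.
    + intros z Hz. destruct (Bl_in z Hz) as [p [Hp ->]].
      destruct (Bp_in p Hp) as [Hx [Hy _]]. apply C0_in in Hx. apply R0_in in Hy.
      exists (fst p), (snd p). split; auto. split; lia.
Qed.


Lemma end_dot w e p q : is_endpoint w e -> on_segment p e -> on_segment q e ->
  cr w p q = 0 /\
  0 <= (fst p - fst w) * (fst q - fst w) + (snd p - snd w) * (snd q - snd w).
Proof.
  intros Hw Hp Hq.
  destruct (seg_param _ _ Hp) as [tp [Tp [Xp Yp]]].
  destruct (seg_param _ _ Hq) as [tq [Tq [Xq Yq]]].
  destruct e as [[ax ay] [bx by_]]; simpl in *. unfold cr.
  destruct Hw as [-> | ->]; simpl; rewrite Xp, Yp, Xq, Yq; split; try ring.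
  - replace ((ax + tp * (bx - ax) - ax) * (ax + tq * (bx - ax) - ax) +
             (ay + tp * (by_ - ay) - ay) * (ay + tq * (by_ - ay) - ay))
      with ((tp * tq) * ((bx - ax) * (bx - ax) + (by_ - ay) * (by_ - ay))) by ring.
    apply Rmult_le_pos; [apply Rmult_le_pos; lra|].
    pose proof (Rle_0_sqr (bx - ax)); pose proof (Rle_0_sqr (by_ - ay)); unfold Rsqr in *; lra.
  - replace ((ax + tp * (bx - ax) - bx) * (ax + tq * (bx - ax) - bx) +
             (ay + tp * (by_ - ay) - by_) * (ay + tq * (by_ - ay) - by_))
      with (((1 - tp) * (1 - tq)) * ((bx - ax) * (bx - ax) + (by_ - ay) * (by_ - ay))) by ring.
    apply Rmult_le_pos; [apply Rmult_le_pos; lra|].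
    pose proof (Rle_0_sqr (bx - ax)); pose proof (Rle_0_sqr (by_ - ay)); unfold Rsqr in *; lra.
Qed.

Lemma share_vertex V E e1 e2 : geometric_tree V E -> In e1 E -> In e2 E -> e1 <> e2 ->
  (forall e, In e E -> e = e1 \/ e = e2) ->
  exists w, is_endpoint w e1 /\ is_endpoint w e2.
Proof.
  intros Ht I1 I2 N12 Hall. destruct (tree_parts V E Ht) as [NDE [HE Hconn]].
  apply NNPP. intro Hno.
  assert (Hst : forall u v, clos_refl_trans point (adj E) u v -> is_endpoint u e1 ->
             is_endpoint v e1).
  { intros u v H. apply clos_rt_rt1n in H. induction H as [x|x y z Hxy Hyz IH]; auto.
    intros Hx. apply IH. destruct Hxy as [Hxy|Hxy]; destruct (Hall _ Hxy) as [Ee|Ee].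
    - rewrite <- Ee. right; auto.
    - exfalso. apply Hno. exists x. split; auto. rewrite <- Ee. left; auto.
    - rewrite <- Ee. left; auto.
    - exfalso. apply Hno. exists x. split; auto. rewrite <- Ee. right; auto. }
  assert (is_endpoint (fst e2) e1).
  { apply (Hst (fst e1)); [|left; auto]. apply Hconn; apply HE; auto. }
  apply Hno. exists (fst e2). split; auto. left; auto.
Qed.

Lemma INR12 x : (1 <= x <= 2)%nat -> INR x = 1 \/ INR x = 2.
Proof. intros. destruct x as [|[|[|x]]]; try lia; simpl; [left|right]; lra. Qed.

Lemma two_by_two V E x0 x1 y0 y1 (Bl : list point) : geometric_tree V E -> (length E <= 2)%nat ->
  x0 < x1 -> y0 < y1 ->
  In (x0,y0) Bl -> In (x0,y1) Bl -> In (x1,y0) Bl -> In (x1,y1) Bl ->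
  (forall z, In z Bl -> exists t e, In t Bl /\ In e E /\ t <> z /\
        on_segment z e /\ on_segment t e) ->
  (forall e p q, In e E -> In p Bl -> In q Bl -> p <> q -> on_segment p e ->
        on_segment q e -> fst p <> fst q /\ snd p <> snd q) ->
  (forall z, In z Bl -> exists x y, z = gp x y /\ (1 <= x <= 2)%nat /\ (1 <= y <= 2)%nat) ->
  False.
Proof.
  intros Ht Hk Hx Hy C00 C01 C10 C11 Hpart Hdiff Hgrid.
  destruct (tree_parts V E Ht) as [NDE [HE Hconn]].
  assert (Hc : forall z, In z Bl -> (fst z = 1 \/ fst z = 2) /\ (snd z = 1 \/ snd z = 2)).
  { intros z Hz. destruct (Hgrid z Hz) as [x [y [-> [Ix Iy]]]]. simpl.
    split; apply INR12; auto. }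
  assert (X0 : x0 = 1 /\ x1 = 2).
  { destruct (Hc _ C00) as [A _]. destruct (Hc _ C10) as [B _]. simpl in *. lra. }
  assert (Y0 : y0 = 1 /\ y1 = 2).
  { destruct (Hc _ C00) as [_ A]. destruct (Hc _ C01) as [_ B]. simpl in *. lra. }
  destruct X0 as [-> ->], Y0 as [-> ->].
  destruct (Hpart _ C00) as [t1 [e1 [It1 [Ie1 [Nt1 [O1 O1']]]]]].
  destruct (Hdiff e1 _ _ Ie1 C00 It1 (not_eq_sym Nt1) O1 O1') as [D1 D1'].
  destruct (Hc _ It1) as [A1 B1]. simpl in D1, D1'.
  assert (Ht1 : t1 = (2,2)) by (apply pt_eq; simpl; lra). subst t1.
  destruct (Hpart _ C01) as [t2 [e2 [It2 [Ie2 [Nt2 [O2 O2']]]]]].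
  destruct (Hdiff e2 _ _ Ie2 C01 It2 (not_eq_sym Nt2) O2 O2') as [D2 D2'].
  destruct (Hc _ It2) as [A2 B2]. simpl in D2, D2'.
  assert (Ht2 : t2 = (2,1)) by (apply pt_eq; simpl; lra). subst t2.
  assert (N12 : e1 <> e2).
  { intro; subst e2. assert ((1,1) <> (1,2)) as Hn by (intro H; inversion H; lra).
    destruct (Hdiff e1 _ _ Ie1 C00 C01 Hn O1 O2). simpl in *. lra. }
  assert (Hall : forall e, In e E -> e = e1 \/ e = e2).
  { intros e Ie. apply NNPP. intro Hn.
    assert (NoDup [e1; e2; e]).
    { constructor; [intros [H|[H|[]]]; subst; tauto|].
      constructor; [intros [H|[]]; subst; tauto|]. constructor; [intros []|constructor]. }
    assert (incl [e1; e2; e] E) by (intros x [<-|[<-|[<-|[]]]]; auto).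
    pose proof (NoDup_incl_length H H0). simpl in H1. lia. }
  destruct (share_vertex V E e1 e2 Ht Ie1 Ie2 N12 Hall) as [w [W1 W2]].
  destruct (end_dot w e1 _ _ W1 O1 O1') as [P1 Q1].
  destruct (end_dot w e2 _ _ W2 O2 O2') as [P2 Q2].
  unfold cr in *. simpl in *. destruct w as [wx wy]. simpl in *. nra.
Qed.


Lemma bound_cases n m V E : (1 <= n)%nat -> (1 <= m)%nat -> geometric_tree V E ->
  covers_grid E n m ->
  (2*n-1 <= length E)%nat \/ (2*m-1 <= length E)%nat \/ (n+m-1 <= length E)%nat \/
  ((n + m - 2 <= length E)%nat /\ (2 <= length (C0 n m E))%nat /\
   (2 <= length (R0 n m E))%nat).
Proof.
  intros Hn Hm Ht Hcov.
  destruct (C0 n m E) as [|x0 [|x1 l]] eqn:HC.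
  - left. apply (case_col0 n m V E); auto.
  - right; right; left. apply (case_colA n m V E x0); auto.
  - destruct (R0 n m E) as [|y0 [|y1 l']] eqn:HR.
    + right; left. apply (case_row0 n m V E); auto.
    + right; right; left. apply (case_rowB n m V E y0); auto.
    + right; right; right. split; [|simpl; lia].
      apply (case_C n m V E Ht Hcov); [rewrite HC|rewrite HR]; simpl; lia.
Qed.

Theorem lemma8 (n m : nat) (V : list point) (E : list edge) :
  (1 <= n)%nat -> (1 <= m)%nat ->
  geometric_tree V E -> covers_grid E n m ->
  (2 * Nat.min n m - 2 <= length E)%nat /\
  ((n <= 2)%nat -> (m <= 2)%nat -> (2 * Nat.min n m - 1 <= length E)%nat) /\
  (n <> m -> (2 * Nat.min n m - 1 <= length E)%nat) /\
  (n = m -> (3 <= n)%nat -> noncrossing E -> (2 * n - 1 <= length E)%nat).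
Proof.
  intros Hn Hm Ht Hcov.
  assert (Hk1 : (1 <= length E)%nat).
  { destruct Ht as [_ [NE _]]. destruct E; [congruence|simpl; lia]. }
  pose proof (bound_cases n m V E Hn Hm Ht Hcov) as Hb.
  pose proof (C_len n m E) as HCl. pose proof (R_len n m E) as HRl.
  destruct (tree_parts V E Ht) as [NDE [HE Hconn]].
  split; [|split; [|split]].
  - destruct Hb as [H|[H|[H|[H _]]]]; lia.
  - intros Hn2 Hm2.
    destruct Hb as [H|[H|[H|[H [Ha Hb']]]]]; try lia.
    destruct (Nat.le_gt_cases 3 (length E)) as [H3|H3]; [lia|].
    exfalso. assert (n = 2%nat /\ m = 2%nat) as [-> ->] by lia.
    destruct (case_C 2 2 V E Ht Hcov Ha Hb') as [_ T].
    destruct (T ltac:(lia)) as [x0 [x1 [y0 [y1 [Bl [Hx [Hy [HB [C00 [C01 [C10 [C11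
      [Hpart [Hdiff [Huniq Hgrid]]]]]]]]]]]]]]].
    apply (two_by_two V E x0 x1 y0 y1 Bl); auto. lia.
  - intros Hnm. destruct Hb as [H|[H|[H|[H _]]]]; lia.
  - intros <- H3 NC.
    destruct Hb as [H|[H|[H|[H [Ha Hb']]]]]; try lia.
    destruct (Nat.le_gt_cases (2 * n - 1) (length E)) as [H4|H4]; [lia|].
    exfalso.
    destruct (case_C n n V E Ht Hcov Ha Hb') as [_ T].
    destruct (T ltac:(lia)) as [x0 [x1 [y0 [y1 [Bl [Hx [Hy [HB [C00 [C01 [C10 [C11
      [Hpart [Hdiff [Huniq Hgrid]]]]]]]]]]]]]]].
    apply (matching x0 x1 y0 y1 E Bl); auto.
    intros e Ie. apply HE; auto.
Qed.
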